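(* Let $X$ be a simple abelian variety over $\mathbb{C}$ and let $n \ge 2$ be an integer. Let $F$ be an automorphism of the abelian variety $X^n$ (a group automorphism, i.e. preserving $0$). Then $F$ satisfies the symmetric condition if and only if \[ F = \sigma \circ \begin{pmatrix} f & g & \cdots & g \\ g & f & \ddots & \vdots \\ \vdots & \ddots & \ddots & g \\ g & \cdots & g & f \end{pmatrix} \] for some permutation $\sigma \in \mathfrak{S}_n$ (acting on $X^n$ by permuting the factors, i.e. as a permutation matrix) and some $f, g \in \operatorname{End}(X)$, where the matrix has $f$ on the diagonal and $g$ in every off-diagonal entry.
   Context: All work is over $\mathbb{C}$. Automorphisms and endomorphisms of abelian varieties are taken to be group homomorphisms (preserving $0$); $\operatorname{End}(X)$ is the endomorphism ring of $X$. An abelian variety is simple if it has no nontrivial abelian subvariety. Every endomorphism $F$ of $X^n$ is written as a matrix $(f_{ij})$ with $f_{ij} \in \operatorname{End}(X)$, where $F(x_1,\dots,x_n)_i = \sum_j f_{ij}(x_j)$. The symmetric product $X^{(n)}$ is the quotient of $X^n$ by the permutation action of the symmetric group $\mathfrak{S}_n$, and $\rho\colon X^n \to X^{(n)}$ is the quotient map. An automorphism $F$ of $X^n$ satisfies the symmetric condition if there exists an automorphism $\tau$ of $X^{(n)}$ with $\tau \circ \rho = \rho \circ F$. *)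

(* Defs.v *)
From HB Require Import structures.
From mathcomp Require Import all_boot all_order all_algebra all_fingroup.
From mathcomp Require Import reals.
From mathcomp Require Import complex.
Set Implicit Arguments. Unset Strict Implicit. Unset Printing Implicit Defensive.
Import Order.TTheory GRing.Theory Num.Theory.
Local Open Scope ring_scope.

(* A complex torus  X = C^g / Lambda  is given by a period matrix            *)
(*   Pi : 'M[R[i]]_(g, g + g)   (columns = a Z-basis of Lambda).             *)
(* Points of X are represented by column vectors of C^g, taken modulo Lambda.*)

Section Torus.
Variables (R : realType) (g : nat).
Local Notation C := (R[i]).

Definition realify k (A : 'M[C]_(g, k)) : 'M[R]_(g + g, k) :=
  col_mx (map_mx (@complex.Re R) A) (map_mx (@complex.Im R) A).

(* the columns of Pi are R-linearly independent: Lambda is a lattice *)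
Definition is_lattice (Pi : 'M[C]_(g, g + g)) : Prop :=
  realify Pi \in unitmx.

Definition intC m k (M : 'M[int]_(m, k)) : 'M[C]_(m, k) := map_mx intr M.
Definition intR m k (M : 'M[int]_(m, k)) : 'M[R]_(m, k) := map_mx intr M.

Definition torus_eq (Pi : 'M[C]_(g, g + g)) (x y : 'cV[C]_g) : Prop :=
  exists m : 'cV[int]_(g + g), x - y = Pi *m intC m.

(* End(X): group endomorphisms of the complex torus X are exactly the maps  *)
(* induced by C-linear maps A of C^g with A(Lambda) \subset Lambda.         *)
Definition is_endo (Pi : 'M[C]_(g, g + g)) (A : 'M[C]_g) : Prop :=
  exists M : 'M[int]_(g + g), A *m Pi = Pi *m intC M.

(* Lattice coordinates of a point u of C^g (well defined when Pi is a       *)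
(* lattice): the real vector c with realify u = realify Pi * c.             *)
Definition lat_coord (Pi : 'M[C]_(g, g + g)) (u : 'cV[C]_g) : 'cV[R]_(g + g) :=
  invmx (realify Pi) *m realify u.

(* the R-bilinear form on C^g extending an integer form E on Lambda *)
Definition ext_form (Pi : 'M[C]_(g, g + g)) (E : 'M[int]_(g + g))
  (u v : 'cV[C]_g) : R :=
  ((lat_coord Pi u)^T *m intR E *m lat_coord Pi v) ord0 ord0.

Definition iC : C := Complex 0 1.

(* Riemann conditions: X admits a polarization, i.e. an alternating integral *)
(* form E on Lambda with E(iu,iv) = E(u,v) and E(iu,u) > 0 for u <> 0        *)
(* (equivalently H(u,v) = E(iu,v) + i E(u,v) is a positive definite          *)
(* hermitian form whose imaginary part is integral on Lambda).              *)
Definition polarizable (Pi : 'M[C]_(g, g + g)) : Prop :=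
  exists E : 'M[int]_(g + g),
    E^T = - E /\
    (forall u v : 'cV[C]_g, ext_form Pi E (iC *: u) (iC *: v) = ext_form Pi E u v) /\
    (forall u : 'cV[C]_g, u != 0 -> 0 < ext_form Pi E (iC *: u) u).

Definition abelian_variety (Pi : 'M[C]_(g, g + g)) : Prop :=
  is_lattice Pi /\ polarizable Pi.

(* An abelian subvariety (= complex subtorus) of X corresponds to a sublattice *)
(* spanned by Q-independent integer vectors (columns of N, in lattice          *)
(* coordinates) whose real span V (spanned by the columns of Pi N) is a        *)
(* complex subspace, i.e. i V \subset V.  It is 0 iff k = 0 and all of X iff   *)
(* k = 2g.  X is simple iff it is nonzero and has no other subtori.            *)
Definition subtorus_lattice k (Pi : 'M[C]_(g, g + g)) (N : 'M[int]_(g + g, k)) : Prop :=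
  \rank (intR N) = k /\
  exists T : 'M[R]_k, iC *: (Pi *m intC N) = (Pi *m intC N) *m map_mx (fun r : R => Complex r 0) T.

Definition simple_torus (Pi : 'M[C]_(g, g + g)) : Prop :=
  (0 < g)%N /\
  forall k (N : 'M[int]_(g + g, k)), subtorus_lattice Pi N ->
    k = 0%N \/ k = (g + g)%N.

Definition simple_abelian_variety (Pi : 'M[C]_(g, g + g)) : Prop :=
  abelian_variety Pi /\ simple_torus Pi.

(* X^n.  Points: families x : 'I_n -> C^g.  Endomorphisms: matrices         *)
(* F : 'I_n -> 'I_n -> End(X), acting by (F x)_i = sum_j F i j (x j).        *)
Variable n : nat.

Definition pow_eq (Pi : 'M[C]_(g, g + g)) (x y : 'I_n -> 'cV[C]_g) : Prop :=
  forall i, torus_eq Pi (x i) (y i).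

Definition is_endo_pow (Pi : 'M[C]_(g, g + g)) (F : 'I_n -> 'I_n -> 'M[C]_g) : Prop :=
  forall i j, is_endo Pi (F i j).

Definition apply_pow (F : 'I_n -> 'I_n -> 'M[C]_g) (x : 'I_n -> 'cV[C]_g) :
  'I_n -> 'cV[C]_g := fun i => \sum_j F i j *m x j.

Definition comp_pow (F G : 'I_n -> 'I_n -> 'M[C]_g) : 'I_n -> 'I_n -> 'M[C]_g :=
  fun i j => \sum_k F i k *m G k j.

Definition id_pow : 'I_n -> 'I_n -> 'M[C]_g :=
  fun i j => if i == j then 1%:M else 0.

Definition is_auto_pow (Pi : 'M[C]_(g, g + g)) (F : 'I_n -> 'I_n -> 'M[C]_g) : Prop :=
  is_endo_pow Pi F /\
  exists G, is_endo_pow Pi G /\ comp_pow F G = id_pow /\ comp_pow G F = id_pow.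

(* The symmetric product X^(n) = X^n / S_n: two points of X^n have the same *)
(* image under rho iff they differ (mod Lambda) by a permutation of factors. *)
Definition sym_rel (Pi : 'M[C]_(g, g + g)) (x y : 'I_n -> 'cV[C]_g) : Prop :=
  exists s : 'S_n, pow_eq Pi (fun i => x (s i)) y.

(* points of X^(n), as the S_n-orbits (equivalence classes of sym_rel) *)
Definition sym_point (Pi : 'M[C]_(g, g + g)) (S : ('I_n -> 'cV[C]_g) -> Prop) : Prop :=
  exists x, S = sym_rel Pi x.

Definition SymProd (Pi : 'M[C]_(g, g + g)) := {S | sym_point Pi S}.

Definition rho (Pi : 'M[C]_(g, g + g)) (x : 'I_n -> 'cV[C]_g) : SymProd Pi :=
  exist _ (sym_rel Pi x) (ex_intro _ x erefl).

Definition symmetric_condition (Pi : 'M[C]_(g, g + g))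
  (F : 'I_n -> 'I_n -> 'M[C]_g) : Prop :=
  exists tau : SymProd Pi -> SymProd Pi,
    bijective tau /\ forall x, tau (rho Pi x) = rho Pi (apply_pow F x).

End Torus.

(* Main.v *)
Require Import Defs.
From HB Require Import structures.
From mathcomp Require Import all_boot all_order all_algebra all_fingroup.
From mathcomp Require Import reals.
From mathcomp Require Import complex.
From Stdlib Require Classical_Prop ClassicalEpsilon ProofIrrelevance FunctionalExtensionality PropExtensionality.
Set Implicit Arguments. Unset Strict Implicit. Unset Printing Implicit Defensive.
Import Order.TTheory GRing.Theory Num.Theory.
Local Open Scope ring_scope.

Section Lat.
Variables (R : realType) (g : nat) (Pi : 'M[R[i]]_(g, g + g)).
Local Notation C := (R[i]).

Definition latv (v : 'cV[C]_g) := exists m : 'cV[int]_(g + g), v = Pi *m intC R m.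

Lemma intCD (a b : 'cV[int]_(g+g)) : intC R (a + b) = intC R a + intC R b :> 'cV[C]_(g+g).
Proof. by apply/matrixP=> i j; rewrite !mxE rmorphD. Qed.
Lemma intCN (a : 'cV[int]_(g+g)) : intC R (- a) = - intC R a :> 'cV[C]_(g+g).
Proof. by apply/matrixP=> i j; rewrite !mxE rmorphN. Qed.
Lemma intC0 : intC R (0 : 'cV[int]_(g+g)) = 0 :> 'cV[C]_(g+g).
Proof. by apply/matrixP=> i j; rewrite !mxE rmorph0. Qed.

Lemma latv0 : latv 0.
Proof. by exists 0; rewrite intC0 mulmx0. Qed.
Lemma latvD u v : latv u -> latv v -> latv (u + v).
Proof. by move=> [a ->] [b ->]; exists (a + b); rewrite intCD mulmxDr. Qed.
Lemma latvN u : latv u -> latv (- u).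
Proof. by move=> [a ->]; exists (- a); rewrite intCN mulmxN. Qed.
Lemma latvB u v : latv u -> latv v -> latv (u - v).
Proof. by move=> hu hv; apply: latvD => //; apply: latvN. Qed.
Lemma latv_sum (I : finType) (F : I -> 'cV[C]_g) : (forall i, latv (F i)) -> latv (\sum_i F i).
Proof.
move=> H; apply: (big_ind latv) => //; [exact: latv0| exact: latvD].
Qed.

Lemma intC_mul (M : 'M[int]_(g+g)) (m : 'cV[int]_(g+g)) :
  intC R (M *m m) = intC R M *m intC R m :> 'cV[C]_(g+g).
Proof.
apply/matrixP=> i j; rewrite !mxE rmorph_sum; apply: eq_bigr => k _.
by rewrite !mxE rmorphM.
Qed.

Lemma latv_endo A v : is_endo Pi A -> latv v -> latv (A *m v).
Proof.
move=> [M HM] [m ->]; exists (M *m m).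
by rewrite mulmxA HM -mulmxA intC_mul.
Qed.

Lemma torus_eqE x y : torus_eq Pi x y <-> latv (x - y).
Proof. by []. Qed.

Lemma latvMn (k : nat) v : latv v -> latv (v *+ k).
Proof.
move=> hv; elim: k => [|k IH]; first by rewrite mulr0n; exact: latv0.
by rewrite mulrS; apply: latvD.
Qed.

End Lat.

Lemma intCr (R : realType) (z : int) : (z%:~R : R[i]) = (z%:~R : R)%:C%C.
Proof. by rewrite -(rmorph_int (@real_complex R)). Qed.

Lemma ReD (R : realType) (a b : R[i]) : complex.Re (a + b) = complex.Re a + complex.Re b.
Proof. by case: a; case: b. Qed.
Lemma ImD (R : realType) (a b : R[i]) : complex.Im (a + b) = complex.Im a + complex.Im b.
Proof. by case: a; case: b. Qed.

Lemma Re_sum (R : realType) (I : finType) (f : I -> R[i]) : complex.Re (\sum_k f k) = \sum_k complex.Re (f k).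
Proof. by apply: (big_morph _ (@ReD R)). Qed.
Lemma Im_sum (R : realType) (I : finType) (f : I -> R[i]) : complex.Im (\sum_k f k) = \sum_k complex.Im (f k).
Proof. by apply: (big_morph _ (@ImD R)). Qed.

Lemma mulmxMn' (K : pzRingType) p q r (A : 'M[K]_(p,q)) (B : 'M[K]_(q,r)) N :
  A *m (B *+ N) = (A *m B) *+ N.
Proof. elim: N => [|N IH]; first by rewrite !mulr0n mulmx0. by rewrite !mulrS mulmxDr IH. Qed.

Section Inj.
Variables (R : realType) (g : nat) (Pi : 'M[R[i]]_(g, g + g)).

Lemma realify_mul (m : 'cV[int]_(g+g)) :
  realify (Pi *m intC R m) = realify Pi *m intR R m.
Proof.
rewrite /realify mul_col_mx; congr col_mx; apply/matrixP=> i j.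
  rewrite !mxE Re_sum; apply: eq_bigr => k _; rewrite !mxE intCr.
  by case: (Pi i k) => a b /=; rewrite mulr0 subr0.
rewrite !mxE Im_sum; apply: eq_bigr => k _; rewrite !mxE intCr.
by case: (Pi i k) => a b /=; rewrite mulr0 add0r.
Qed.

Lemma lat_inj (m m' : 'cV[int]_(g+g)) : is_lattice Pi ->
  Pi *m intC R m = Pi *m intC R m' -> m = m'.
Proof.
move=> hL E.
have E2 : realify Pi *m intR R m = realify Pi *m intR R m' by rewrite -!realify_mul E.
have E3 : intR R m = intR R m'.
  by rewrite -(mulKmx hL (intR R m)) E2 mulKmx.
apply/matrixP=> i j; move/matrixP: E3 => /(_ i j); rewrite !mxE.
exact: intr_inj.
Qed.

Lemma lat_bound (w : 'cV[R[i]]_g) : is_lattice Pi ->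
  exists B : nat, forall N : nat, (B < N)%N ->
    (exists v, latv Pi v /\ w = v *+ N) -> w = 0.
Proof.
move=> hL.
case: (Classical_Prop.classic (latv Pi w)) => [[M hM]|nl]; last first.
  exists 0%N => N hN [v [hv ew]]; exfalso; apply: nl; rewrite ew; exact: latvMn.
exists (\max_(k < g + g) `|M k ord0|%N) => N hN [v [[m hm] ew]].
have : M = m *+ N.
  apply: (lat_inj hL); rewrite -hM ew hm.
  rewrite -mulmxMn'; congr (_ *m _); apply/matrixP=> i j; rewrite !mxE.
  by rewrite !mulmxnE !mxE rmorphMn.
move=> EM.
have m0 : m = 0.
  apply/matrixP=> k j; rewrite (ord1 j).
  apply/eqP; apply: contraTT hN => nz; rewrite -leqNgt.
  apply: (leq_trans _ (leq_bigmax k)); rewrite EM mulmxnE.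
  move: nz; rewrite mxE => nz.
  by rewrite -mulr_natl mulrC abszM natz -{1}(mul1n N) leq_mul2r absz_gt0 nz orbT.
by rewrite ew hm m0 intC0 mulmx0 mul0rn.
Qed.
End Inj.

Lemma sig_eq (A : Type) (P : A -> Prop) (a b : A) (pa : P a) (pb : P b) :
  a = b -> exist P a pa = exist P b pb.
Proof. move=> E; subst; congr exist; apply: ProofIrrelevance.proof_irrelevance. Qed.

Section Sym.
Variables (R : realType) (g n : nat) (Pi : 'M[R[i]]_(g, g + g)).
Local Notation V := ('I_n -> 'cV[R[i]]_g).

Lemma torus_latv (a b : 'cV[R[i]]_g) : latv Pi (a - b) -> torus_eq Pi a b.
Proof. by []. Qed.
Lemma latv_torus (a b : 'cV[R[i]]_g) : torus_eq Pi a b -> latv Pi (a - b).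
Proof. by []. Qed.

Lemma sym_refl (x : V) : sym_rel Pi x x.
Proof. exists 1%g => i; apply: torus_latv; rewrite perm1 subrr; exact: latv0. Qed.

Lemma sym_sym (x y : V) : sym_rel Pi x y -> sym_rel Pi y x.
Proof.
move=> [s hs]; exists (s^-1)%g => i; apply: torus_latv.
have := latvN (latv_torus (hs (s^-1 i)%g)); rewrite permKV opprB; exact.
Qed.

Lemma sym_trans (x y z : V) : sym_rel Pi x y -> sym_rel Pi y z -> sym_rel Pi x z.
Proof.
move=> [s hs] [t ht]; exists (t * s)%g => i; apply: torus_latv.
have := latvD (latv_torus (hs (t i))) (latv_torus (ht i)); rewrite permM addrA subrK; exact.
Qed.

Lemma rhoP (x y : V) : rho Pi x = rho Pi y <-> sym_rel Pi x y.
Proof.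
split.
  move=> E; have := f_equal (@proj1_sig _ _) E => /= ->; exact: sym_refl.
move=> h; apply: sig_eq; apply: FunctionalExtensionality.functional_extensionality => z.
apply: PropExtensionality.propositional_extensionality; split=> hz.
  exact: sym_trans (sym_sym h) hz.
exact: sym_trans h hz.
Qed.

Lemma sc_wd (F : 'I_n -> 'I_n -> 'M[R[i]]_g) : symmetric_condition Pi F ->
  forall x y : V, sym_rel Pi x y -> sym_rel Pi (apply_pow F x) (apply_pow F y).
Proof.
move=> [tau [_ htau]] x y /rhoP E; apply/rhoP; by rewrite -!htau E.
Qed.

End Sym.

Section Cover.
Variables (R : realType) (g n : nat) (Pi : 'M[R[i]]_(g, g + g)).
Local Notation C := (R[i]).
Local Notation V := ('I_n -> 'cV[R[i]]_g).

Lemma scale_zero (S : finType) (D : S -> V -> 'I_n -> 'cV[C]_g) :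
  is_lattice Pi ->
  (forall s (c : C) x i, D s (fun j => c *: x j) i = c *: D s x i) ->
  (forall x, exists s, forall i, latv Pi (D s x i)) ->
  forall x, exists s, forall i, D s x i = 0.
Proof.
move=> hL hlin hcov x.
have hb : forall p : S * 'I_n, exists B : nat, forall N : nat, (B < N)%N ->
    (exists v, latv Pi v /\ D p.1 x p.2 = v *+ N) -> D p.1 x p.2 = 0.
  by move=> p; apply: lat_bound.
have [f hf] := fin_all_exists hb.
set N := (\max_p f p).+1.
have hN : N%:R != 0 :> C by rewrite pnatr_eq0.
have [s hs] := hcov (fun j => (N%:R)^-1 *: x j).
exists s => i; apply: (hf (s, i) N) => /=.
  by rewrite /N ltnS (leq_bigmax (s, i)).
exists (D s (fun j => (N%:R)^-1 *: x j) i); split; first exact: hs.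
by rewrite hlin -scaler_nat scalerA mulfV // scale1r.
Qed.

Lemma cover (S : finType) (L : S -> V -> 'I_n -> 'cV[C]_g) :
  (forall s x y (t : C) i, L s (fun j => x j + t *: y j) i = L s x i + t *: L s y i) ->
  (forall x, exists s, forall i, L s x i = 0) -> exists s, forall x i, L s x i = 0.
Proof.
move=> hlin hcov.
suff main : forall k (A : {set S}), (#|A| <= k)%N ->
    (forall x, exists2 s, s \in A & forall i, L s x i = 0) ->
    exists2 s, s \in A & forall x i, L s x i = 0.
  have [s _ hs] := main #|[set: S]| [set: S] (leqnn _)
    (fun x => let: ex_intro s hs := hcov x in ex_intro2 _ _ s (in_setT s) hs).
  by exists s.
elim=> [|k IH] A hA hc.
  have [s sA _] := hc (fun _ => 0).
  by move: hA; rewrite leqn0 => /eqP/cards0_eq A0; rewrite A0 inE in sA.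
case: (Classical_Prop.classic (exists2 s, s \in A & forall x i, L s x i = 0)) => [//|nex].
have [s0 s0A _] := hc (fun _ => 0).
have [y [i0 hy]] : exists y i0, L s0 y i0 <> 0.
  apply: Classical_Prop.NNPP => H; apply: nex; exists s0 => // y i0.
  apply: Classical_Prop.NNPP => H2; apply: H; exists y, i0; exact: H2.
have hA' : (#|A :\ s0| <= k)%N.
  by move: hA; rewrite (cardsD1 s0 A) s0A add1n ltnS.
have hc' : forall x, exists2 s, s \in A :\ s0 & forall i, L s x i = 0.
  move=> x.
  have hz : forall t : 'I_(#|A|.+1), exists s, s \in A /\
      forall i, L s (fun j => x j + (t%:R : C) *: y j) i = 0.
    by move=> t; have [s sA hs] := hc (fun j => x j + (t%:R : C) *: y j); exists s.
  have [f hf] := fin_all_exists hz.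
  have ninj : ~ injective f.
    move=> finj.
    have : (#|[set f t | t in [set: 'I_(#|A|.+1)]]| <= #|A|)%N.
      apply: subset_leq_card; apply/subsetP => z /imsetP [t _ ->]; exact: (hf t).1.
    by rewrite card_imset // cardsT card_ord ltnn.
  have [t1 [t2 [E ne]]] : exists t1 t2, f t1 = f t2 /\ t1 <> t2.
    apply: Classical_Prop.NNPP => H; apply: ninj => t1 t2 E.
    apply: Classical_Prop.NNPP => ne; apply: H; exists t1, t2; split.
      exact: E.
    exact: ne.
  have L0y : forall i, L (f t1) y i = 0.
    move=> i; have h1 := (hf t1).2 i; have h2 := (hf t2).2 i.
    rewrite hlin in h1; rewrite -E hlin in h2.
    have : ((t1%:R : C) - t2%:R) *: L (f t1) y i = 0.
      have e : ((t1%:R : C) - t2%:R) *: L (f t1) y i =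
        (L (f t1) x i + (t1%:R : C) *: L (f t1) y i) - (L (f t1) x i + (t2%:R : C) *: L (f t1) y i).
        by rewrite scalerBl opprD addrACA subrr add0r.
      by rewrite e h1 h2 subrr.
    move/eqP; rewrite scaler_eq0 subr_eq0 eqr_nat => /orP [/eqP h|/eqP //].
    by exfalso; apply: ne; apply: val_inj.
  exists (f t1).
    rewrite !inE (hf t1).1 andbT; apply/eqP => es; apply: hy; rewrite -es; exact: L0y.
  move=> i; have := (hf t1).2 i; by rewrite hlin L0y scaler0 addr0.
have [s sA' hs] := IH _ hA' hc'.
by exists s => //; move: sA'; rewrite inE => /andP[].
Qed.

End Cover.

Section ApplyLin.
Variables (R : realType) (g n : nat).
Local Notation C := (R[i]).
Implicit Types (F : 'I_n -> 'I_n -> 'M[C]_g) (x y : 'I_n -> 'cV[C]_g).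

Lemma apply_powZ F (c : C) x i :
  apply_pow F (fun j => c *: x j) i = c *: apply_pow F x i.
Proof. by rewrite /apply_pow scaler_sumr; apply: eq_bigr => j _; rewrite scalemxAr. Qed.

Lemma apply_powDZ F x y (t : C) i :
  apply_pow F (fun j => x j + t *: y j) i = apply_pow F x i + t *: apply_pow F y i.
Proof.
rewrite /apply_pow scaler_sumr -big_split; apply: eq_bigr => j _.
by rewrite mulmxDr scalemxAr.
Qed.

Lemma apply_pow_delta F j0 (e : 'cV[C]_g) i :
  apply_pow F (fun j => if j == j0 then e else 0) i = F i j0 *m e.
Proof.
rewrite /apply_pow (bigD1 j0) //= eqxx big1 ?addr0 // => j /negbTE ->.
by rewrite mulmx0.
Qed.

Lemma mx_col_eq (A B : 'M[C]_g) : (forall k : 'I_g, A *m (delta_mx k 0 : 'cV[C]_g) = B *m delta_mx k 0) -> A = B.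
Proof.
move=> h; apply/matrixP=> a b; have := congr1 (fun M : 'cV[C]_g => M a ord0) (h b).
by rewrite -!colE !mxE.
Qed.

End ApplyLin.

Section Main1.
Variables (R : realType) (g n : nat) (Pi : 'M[R[i]]_(g, g + g)).
Variable F : 'I_n -> 'I_n -> 'M[R[i]]_g.
Hypothesis hL : is_lattice Pi.
Hypothesis WD : forall x y : 'I_n -> 'cV[R[i]]_g,
  sym_rel Pi x y -> sym_rel Pi (apply_pow F x) (apply_pow F y).

Lemma perm_rel (p : 'S_n) : exists s : 'S_n, forall i j, F (s i) j = F i ((p^-1)%g j).
Proof.
pose D (s : 'S_n) (x : 'I_n -> 'cV[R[i]]_g) i :=
  apply_pow F x (s i) - apply_pow F (fun j => x (p j)) i.
have hcov : forall x, exists s, forall i, latv Pi (D s x i).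
  move=> x.
  have hsym : sym_rel Pi x (fun j => x (p j)).
    by exists p => i; apply: torus_latv; rewrite subrr; exact: latv0.
  have [s hs] := WD hsym.
  by exists s => i; apply: latv_torus; exact: hs.
have hZ : forall s (c : R[i]) x i, D s (fun j => c *: x j) i = c *: D s x i.
  by move=> s c x i; rewrite /D !apply_powZ scalerBr.
have hDZ : forall s x y (t : R[i]) i, D s (fun j => x j + t *: y j) i = D s x i + t *: D s y i.
  move=> s x y t i; rewrite /D !apply_powDZ scalerBr.
  by rewrite opprD addrACA.
have [s hs] := cover hDZ (scale_zero hL hZ hcov).
exists s => i j; apply: mx_col_eq => k.
have := hs (fun j' => if j' == j then delta_mx k 0 else 0) i.
rewrite /D apply_pow_delta.
have -> : (fun j' => (if p j' == j then delta_mx k 0 else 0)) =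
          (fun j' => if j' == (p^-1)%g j then delta_mx k 0 else 0 : 'cV[R[i]]_g).
  apply: FunctionalExtensionality.functional_extensionality => j'.
  congr (if _ then _ else _); apply/eqP/eqP => [<-|->]; by rewrite ?permK ?permKV.
by rewrite apply_pow_delta => /eqP; rewrite subr_eq0 => /eqP.
Qed.

End Main1.

Section Trace.
Variables (R : realType) (g n : nat).
Local Notation C := (R[i]).
Local Notation M := ('I_n -> 'I_n -> 'M[C]_g).

Lemma mxtrace_sum (I : finType) (A : I -> 'M[C]_g) : \tr (\sum_k A k) = \sum_k \tr (A k).
Proof. exact: raddf_sum. Qed.

Definition tr_pow (A : M) : C := \sum_i \tr (A i i).

Lemma funext2 (A B : M) : (forall i j, A i j = B i j) -> A = B.
Proof.
move=> h; apply: FunctionalExtensionality.functional_extensionality => i.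
apply: FunctionalExtensionality.functional_extensionality => j; exact: h.
Qed.

Lemma comp_powA (A B D : M) : comp_pow (comp_pow A B) D = comp_pow A (comp_pow B D).
Proof.
apply: funext2 => i j; rewrite /comp_pow.
under eq_bigr do rewrite mulmx_suml.
rewrite exchange_big /=; apply: eq_bigr => l _.
by rewrite mulmx_sumr; apply: eq_bigr => k _; rewrite mulmxA.
Qed.

Lemma comp_pow1 (A : M) : comp_pow A (@id_pow R g n) = A.
Proof.
apply: funext2 => i j; rewrite /comp_pow /id_pow (bigD1 j) //= eqxx mulmx1.
by rewrite big1 ?addr0 // => k /negbTE ->; rewrite mulmx0.
Qed.

Lemma tr_pow_comm (A B : M) : tr_pow (comp_pow A B) = tr_pow (comp_pow B A).
Proof.
rewrite /tr_pow /comp_pow.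
under eq_bigr do rewrite mxtrace_sum.
rewrite exchange_big /=; apply: eq_bigr => k _; rewrite mxtrace_sum.
by apply: eq_bigr => i _; rewrite mxtrace_mulC.
Qed.

Lemma tr_perm_row (s : 'S_n) :
  tr_pow (fun i k => if s i == k then 1%:M else 0) = (#|[set i | s i == i]| * g)%:R.
Proof.
rewrite /tr_pow.
have -> : \sum_i \tr (if s i == i then (1%:M : 'M[C]_g) else 0) =
          \sum_i (if s i == i then (g%:R : C) else 0).
  by apply: eq_bigr => i _; case: ifP => _; rewrite ?mxtrace1 ?mxtrace0.
rewrite -big_mkcond /= sumr_const cardsE natrM mulr_natl.
by [].
Qed.

End Trace.

Section FixCount.
Variables (R : realType) (g n : nat).
Local Notation C := (R[i]).
Local Notation M := ('I_n -> 'I_n -> 'M[C]_g).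

Lemma fix_count (F G : M) (s p : 'S_n) :
  comp_pow F G = @id_pow R g n -> comp_pow G F = @id_pow R g n -> (0 < g)%N ->
  (forall i j, F (s i) j = F i (p j)) ->
  #|[set i | s i == i]| = #|[set i | p i == i]|.
Proof.
move=> hFG hGF g0 hsp.
pose Prow : M := fun i k => if s i == k then 1%:M else 0.
pose Pcol : M := fun k j => if p j == k then 1%:M else 0.
have e1 : comp_pow Prow F = comp_pow F Pcol.
  apply: funext2 => i j; rewrite /comp_pow /Prow /Pcol.
  rewrite (bigD1 (s i)) //= eqxx mul1mx big1 ?addr0; last first.
    by move=> k; rewrite eq_sym => /negbTE ->; rewrite mul0mx.
  rewrite (bigD1 (p j)) //= eqxx mulmx1 big1 ?addr0; last first.
    by move=> k; rewrite eq_sym => /negbTE ->; rewrite mulmx0.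
  exact: hsp.
have e2 : tr_pow Prow = tr_pow Pcol.
  rewrite -[Prow]comp_pow1 -hFG -comp_powA e1 comp_powA tr_pow_comm comp_powA hGF.
  by rewrite comp_pow1.
have : ((#|[set i | s i == i]| * g)%:R : C) = (#|[set i | p i == i]| * g)%:R.
  by rewrite -!tr_perm_row.
move/eqP; rewrite eqr_nat eqn_mul2r eqn0Ngt g0 /= => /eqP //.
Qed.

Lemma perm2 (s : 'S_n) : #|[set i | s i != i]| = 2%N -> exists x y, x != y /\ s = tperm x y.
Proof.
move/eqP/cards2P => [x [y [nxy E]]].
have mv : forall z, (s z != z) = (z \in [set x; y]) by move=> z; rewrite -E inE.
have sx : s x = y.
  have h1 : s x != x by rewrite mv !inE eqxx.
  have : s x \in [set x; y].
    by rewrite -mv; apply: contra h1 => /eqP/perm_inj ->.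
  by rewrite !inE (negbTE h1) => /eqP.
have sy : s y = x.
  have h1 : s y != y by rewrite mv !inE eqxx orbT.
  have : s y \in [set x; y].
    by rewrite -mv; apply: contra h1 => /eqP/perm_inj ->.
  by rewrite !inE (negbTE h1) orbF => /eqP.
exists x, y; split => //; apply/permP => z.
case: (tpermP x y z) => [->|->|/eqP nx /eqP ny] //.
by apply/eqP; apply: negbNE; rewrite mv !inE negb_or nx ny.
Qed.

Lemma card_moved (s p : 'S_n) : #|[set i | s i == i]| = #|[set i | p i == i]| ->
  #|[set i | s i != i]| = #|[set i | p i != i]|.
Proof.
move=> E.
have h : forall q : 'S_n, #|[set i | q i != i]| = (n - #|[set i | q i == i]|)%N.
  move=> q; rewrite -[X in (X - _)%N](card_ord n) -(cardsC [set i | q i == i]) addKn.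
  by apply: eq_card => i; rewrite !inE.
by rewrite !h E.
Qed.

Lemma moved_tperm (a b : 'I_n) : a != b -> #|[set i | tperm a b i != i]| = 2%N.
Proof.
move=> nab; have := cards2 a b; rewrite nab => <-.
apply: eq_card => z; rewrite !inE.
case: (tpermP a b z) => [->|->|/eqP na /eqP nb].
- by rewrite eq_sym nab eqxx.
- by rewrite nab eqxx orbT.
- by rewrite eqxx (negbTE na) (negbTE nb).
Qed.

End FixCount.

Section Comb.
Variables (R : realType) (g n : nat).
Local Notation C := (R[i]).
Local Notation M := ('I_n -> 'I_n -> 'M[C]_g).
Variables (F G : M) (a0 : 'I_n).
Hypothesis hGF : comp_pow G F = @id_pow R g n.
Hypothesis g0 : (0 < g)%N.

Definition good (b x y : 'I_n) :=
  x != y /\ forall i j, F (tperm x y i) j = F i (tperm a0 b j).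

Lemma good_sym b x y : good b x y -> good b y x.
Proof. by move=> [nxy h]; split; [rewrite eq_sym | move=> i j; rewrite tpermC]. Qed.

Lemma good_colb b x y : good b x y -> forall i, F i b = F (tperm x y i) a0.
Proof. by move=> [_ h] i; have := h (tperm x y i) b; rewrite tpermK tpermR. Qed.

Lemma good_colj b x y : good b x y -> forall j, j != a0 -> j != b -> F x j = F y j.
Proof.
move=> [_ h] j ja jb; have := h x j; rewrite tpermL tpermD // eq_sym //.
Qed.

Lemma good_N b x y : b != a0 -> good b x y -> F x a0 != F y a0.
Proof.
move=> ba hg; apply/negP => /eqP E.
have cb : forall i, F i b = F i a0.
  move=> i; rewrite (good_colb hg); case: (tpermP x y i) => [->|->|] //; by rewrite E.
have : comp_pow G F a0 b = comp_pow G F a0 a0.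
  by rewrite /comp_pow; apply: eq_bigr => k _; rewrite cb.
rewrite hGF /id_pow eqxx eq_sym (negbTE ba) => /matrixP /(_ (Ordinal g0) (Ordinal g0)).
by rewrite !mxE eqxx /= => /eqP; rewrite eq_sym oner_eq0.
Qed.

Lemma good_A2 b e x y : b != a0 -> e != a0 -> good b x y -> good e x y -> b = e.
Proof.
move=> ba ea hb he; apply/eqP; apply: contraNT (good_N ba hb) => nbe.
have := good_colj hb ea; rewrite eq_sym => /(_ nbe).
by rewrite !(good_colb he) tpermL tpermR => E; apply/eqP.
Qed.

Lemma good_A1 b e x y x' y' : b != a0 -> e != a0 -> b != e ->
  good b x y -> good e x' y' -> [|| x == x', x == y', y == x' | y == y'].
Proof.
move=> ba ea nbe hb he; apply: contraNT (good_N ba hb).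
rewrite !negb_or => /and4P [h1 h2 h3 h4].
have t1 : tperm x' y' x = x by rewrite tpermD // eq_sym.
have t2 : tperm x' y' y = y by rewrite tpermD // eq_sym.
have := good_colj hb ea; rewrite eq_sym => /(_ nbe).
by rewrite !(good_colb he) t1 t2 => E; apply/eqP.
Qed.

Lemma good_C b e r u u' : b != a0 -> e != a0 -> b != e ->
  good b r u -> good e r u' -> F u a0 = F u' a0.
Proof.
move=> ba ea nbe hb he.
have nuu : u != u'.
  by apply: contra nbe => /eqP E; rewrite E in hb; rewrite (good_A2 ba ea hb he).
have nur : u != r by rewrite eq_sym; case: hb.
have := good_colj hb ea; rewrite eq_sym => /(_ nbe).
have t1 : tperm r u' u = u by rewrite tpermD // eq_sym.
by rewrite !(good_colb he) tpermL t1 => ->.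
Qed.

Lemma common_point (b1 : 'I_n) : b1 != a0 ->
  (forall b, b != a0 -> exists x y, good b x y) ->
  exists r, forall b, b != a0 -> exists u, good b r u.
Proof.
move=> b1a hex.
have [x1 [y1 h1]] := hex b1 b1a.
case: (Classical_Prop.classic (exists b2, b2 != a0 /\ b2 != b1)) => [[b2 [b2a b21]]|nob2]; last first.
  exists x1 => b ba.
  have eb : b = b1.
    apply: Classical_Prop.NNPP => ne; apply: nob2; exists b; split => //; exact/eqP.
  by rewrite eb; exists y1.
have [x2 [y2 h2]] := hex b2 b2a.
have nb12 : b1 != b2 by rewrite eq_sym.
have [r [u1 [u2 [hr1 hr2]]]] : exists r u1 u2, good b1 r u1 /\ good b2 r u2.
  case/or4P: (good_A1 b1a b2a nb12 h1 h2) => /eqP E.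
  - by exists x1, y1, y2; split; [|rewrite E].
  - by exists x1, y1, x2; split; [|rewrite E; exact: good_sym].
  - by exists y1, x1, y2; split; [exact: good_sym|rewrite E].
  - by exists y1, x1, x2; split; [exact: good_sym|rewrite E; exact: good_sym].
exists r => b ba.
case: (eqVneq b b1) => [->|nb1]; first by exists u1.
case: (eqVneq b b2) => [->|nb2]; first by exists u2.
have [x [y hb]] := hex b ba.
case: (eqVneq x r) => [ex|nxr]; first by exists y; rewrite -ex.
case: (eqVneq y r) => [ey|nyr]; first by exists x; rewrite -ey; exact: good_sym.
exfalso.
have nu12 : u1 != u2.
  by apply: contra nb12 => /eqP E; rewrite E in hr1; rewrite (good_A2 b1a b2a hr1 hr2).
have Cu := good_C b1a b2a nb12 hr1 hr2.
have a1 := good_A1 ba b1a nb1 hb hr1.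
have a2 := good_A1 ba b2a nb2 hb hr2.
rewrite (negbTE nxr) (negbTE nyr) /= in a1 a2.
have hN := good_N ba hb.
case/orP: a1 => /eqP e1; case/orP: a2 => /eqP e2.
- by move: nu12; rewrite -e1 -e2 eqxx.
- by move: hN; rewrite e1 e2 Cu eqxx.
- by move: hN; rewrite e1 e2 Cu eqxx.
- by move: nu12; rewrite -e1 -e2 eqxx.
Qed.

Lemma comb_main (b1 : 'I_n) : b1 != a0 ->
  (forall b, b != a0 -> exists x y, good b x y) ->
  exists (s : 'S_n) (r u0 : 'I_n), forall i j, F i j = if s i == j then F r a0 else F u0 a0.
Proof.
move=> b1a hex.
have [r hr] := common_point b1a hex.
have hu : forall b, exists u, b != a0 -> good b r u.
  move=> b; case: (eqVneq b a0) => [->|ba]; first by exists r.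
  by have [u hu] := hr b ba; exists u.
have [u hu'] := fin_all_exists hu.
pose Q b := if b == a0 then r else u b.
have ur : forall b, b != a0 -> u b != r.
  by move=> b ba; case: (hu' b ba); rewrite eq_sym.
have Qinj : injective Q.
  move=> b e; rewrite /Q; case: (eqVneq b a0) => [->|ba]; case: (eqVneq e a0) => [->|ea] //.
  - by move=> E; have := ur e ea; rewrite -E eqxx.
  - by move=> E; have := ur b ba; rewrite E eqxx.
  - move=> E; apply: (good_A2 ba ea (hu' b ba)); rewrite E; exact: hu' e ea.
pose P := perm Qinj.
have PE : forall b, P b = Q b by move=> b; rewrite permE.
have col0 : forall i, i != r -> F i a0 = F (u b1) a0.
  move=> i ir.
  have Ei : i = Q ((P^-1)%g i) by rewrite -PE permKV.
  move: Ei; set e := (P^-1)%g i => Ei.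
  have ea : e != a0 by apply: contra ir => /eqP ea; rewrite Ei /Q ea eqxx.
  have iu : i = u e by rewrite Ei /Q (negbTE ea).
  rewrite iu; case: (eqVneq e b1) => [->//|eb1].
  exact: good_C ea b1a eb1 (hu' e ea) (hu' b1 b1a).
exists (P^-1)%g, r, (u b1) => i j.
have key : ((P^-1)%g i == j) = (i == Q j).
  by rewrite -PE; apply/eqP/eqP => [<-|->]; rewrite ?permKV ?permK.
rewrite key /Q; case: (eqVneq j a0) => [->|ja].
  case: (eqVneq i r) => [->//|ir]; exact: col0.
rewrite (good_colb (hu' j ja)).
case: (tpermP r (u j) i) => [->|->|/eqP ir /eqP iu].
- by rewrite eq_sym (negbTE (ur j ja)); apply: col0; exact: ur.
- by rewrite eqxx.
- by rewrite (negbTE iu); apply: col0.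
Qed.

End Comb.

Section Back.
Variables (R : realType) (g n : nat) (Pi : 'M[R[i]]_(g, g + g)).
Local Notation C := (R[i]).
Local Notation V := ('I_n -> 'cV[R[i]]_g).
Local Notation M := ('I_n -> 'I_n -> 'M[C]_g).

Lemma apply_latv (A : M) (z : V) i : is_endo_pow Pi A -> (forall j, latv Pi (z j)) ->
  latv Pi (apply_pow A z i).
Proof. move=> hA hz; apply: latv_sum => j; apply: latv_endo; [exact: hA | exact: hz]. Qed.

Lemma apply_powB (A : M) (x y : V) i :
  apply_pow A x i - apply_pow A y i = apply_pow A (fun j => x j - y j) i.
Proof. by rewrite /apply_pow -sumrB; apply: eq_bigr => j _; rewrite mulmxBr. Qed.

Lemma apply_comp (A B : M) (z : V) i :
  apply_pow A (apply_pow B z) i = apply_pow (comp_pow A B) z i.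
Proof.
rewrite /apply_pow /comp_pow.
under eq_bigr do rewrite mulmx_sumr.
rewrite exchange_big /=; apply: eq_bigr => j _.
by rewrite mulmx_suml; apply: eq_bigr => k _; rewrite mulmxA.
Qed.

Lemma apply_id (z : V) i : apply_pow (@id_pow R g n) z i = z i.
Proof.
rewrite /apply_pow /id_pow (bigD1 i) //= eqxx mul1mx big1 ?addr0 //.
by move=> j; rewrite eq_sym => /negbTE ->; rewrite mul0mx.
Qed.

Variables (F G : M) (s : 'S_n) (f h : 'M[C]_g).
Hypothesis hF : forall i j, F i j = if s i == j then f else h.
Hypothesis eF : is_endo_pow Pi F.
Hypothesis eG : is_endo_pow Pi G.
Hypothesis hFG : comp_pow F G = @id_pow R g n.
Hypothesis hGF : comp_pow G F = @id_pow R g n.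

Lemma Fperm (x : V) (sg p : 'S_n) : (forall i, s (sg i) = p (s i)) ->
  forall i, apply_pow F x (sg i) = apply_pow F (fun j => x (p j)) i.
Proof.
move=> hs i; rewrite /apply_pow (reindex_inj (@perm_inj _ p)) /=.
apply: eq_bigr => j _; rewrite !hF hs (inj_eq perm_inj) //.
Qed.

Lemma F_resp (x y : V) : sym_rel Pi x y -> sym_rel Pi (apply_pow F x) (apply_pow F y).
Proof.
move=> [p hp]; exists (s * p * s^-1)%g => i; apply: torus_latv.
rewrite (@Fperm x _ p); last by move=> k; rewrite !permM permKV.
rewrite apply_powB; apply: apply_latv => // j; apply: latv_torus; exact: hp.
Qed.

Lemma F_refl (x y : V) : sym_rel Pi (apply_pow F x) (apply_pow F y) -> sym_rel Pi x y.
Proof.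
move=> [sg hsg]; exists (s^-1 * sg * s)%g => i; apply: torus_latv.
have E : forall k, latv Pi (apply_pow F (fun j => x ((s^-1 * sg * s)%g j) - y j) k).
  move=> k; rewrite -apply_powB -(@Fperm x sg); last by move=> l; rewrite !permM permK.
  apply: latv_torus; exact: hsg.
have := apply_latv i eG E.
by rewrite apply_comp hGF apply_id.
Qed.

Lemma FG (y : V) : apply_pow F (apply_pow G y) = y.
Proof.
apply: FunctionalExtensionality.functional_extensionality => i.
by rewrite apply_comp hFG apply_id.
Qed.

Definition xpick (S : @SymProd R g n Pi) : V :=
  proj1_sig (ClassicalEpsilon.constructive_indefinite_description _ (proj2_sig S)).

Lemma xpickP (S : @SymProd R g n Pi) : S = rho Pi (xpick S).
Proof.
rewrite /xpick; case: (ClassicalEpsilon.constructive_indefinite_description _ _) => x /= hx.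
by case: S hx => S pS /= hx; apply: sig_eq.
Qed.

Lemma xpick_rho (y : V) : sym_rel Pi (xpick (rho Pi y)) y.
Proof. apply/rhoP; by rewrite -xpickP. Qed.

Lemma back_sc : symmetric_condition Pi F.
Proof.
pose tau (S : @SymProd R g n Pi) := rho Pi (apply_pow F (xpick S)).
pose tinv (S : @SymProd R g n Pi) := rho Pi (apply_pow G (xpick S)).
have htau : forall x, tau (rho Pi x) = rho Pi (apply_pow F x).
  by move=> x; apply/rhoP; apply: F_resp; exact: xpick_rho.
exists tau; split => //; exists tinv.
  move=> S; rewrite [in RHS](xpickP S); apply/rhoP; apply: F_refl.
  rewrite FG /tau; exact: (xpick_rho (apply_pow F (xpick S))).
move=> S; rewrite /tinv htau FG; exact: (esym (xpickP S)).
Qed.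

End Back.

Unset Implicit Arguments.

Theorem theorem1p4 (R : realType) (g : nat) (Pi : 'M[R[i]]_(g, g + g))
  (n : nat) (F : 'I_n -> 'I_n -> 'M[R[i]]_g) :
  simple_abelian_variety Pi -> (2 <= n)%N -> is_auto_pow Pi F ->
  (symmetric_condition Pi F <->
   exists (s : 'S_n) (f h : 'M[R[i]]_g),
     is_endo Pi f /\ is_endo Pi h /\
     forall i j, F i j = if s i == j then f else h).
Proof.
move=> [[hL _] [g0 _]] hn [eF [G [eG [hFG hGF]]]]; split; last first.
  by move=> [s [f [h [ef [eh hF]]]]]; exact: (back_sc hF eF eG hFG hGF).
move=> hsc; have WD := sc_wd hsc.
have n0 : (0 < n)%N by apply: leq_trans hn.
pose a0 : 'I_n := Ordinal n0.
pose b1 : 'I_n := Ordinal hn.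
have b1a : b1 != a0 by [].
have hex : forall b, b != a0 -> exists x y, good F a0 b x y.
  move=> b ba.
  have [rh hrh] := perm_rel hL WD (tperm a0 b).
  rewrite tpermV in hrh.
  have hc := fix_count hFG hGF g0 hrh.
  have hm := card_moved hc.
  rewrite moved_tperm in hm; last by rewrite eq_sym.
  have [x [y [nxy E]]] := perm2 hm.
  exists x, y; split => //; by rewrite -E.
have [s [r [u0 hs]]] := comb_main hGF g0 b1a hex.
exists s, (F r a0), (F u0 a0); split; first exact: eF.
by split; first exact: eF.
Qed.
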